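(* Let $\mathcal{G}=(\mathcal{V},\mathcal{E})$ be an unweighted connected finite simple graph and let $u\in\mathcal{V}$ be dominated by some vertex $v\in\mathcal{V}$, $v\neq u$. Then for every $k\geq 1$, $$\widehat{PD}_k(\mathcal{G})=\widehat{PD}_k(\mathcal{G}-\{u\}).$$
   Context: $N(w)$ is the closed neighborhood of $w$ (the vertex together with its neighbors); $u$ is dominated by $v\ne u$ if $N(u)\subset N(v)$. $\mathcal{G}-\{u\}$ deletes $u$ and its incident edges. For $n\ge 1$, the $n$-th power $\mathcal{G}^{(n)}$ is the graph on $\mathcal{V}$ in which distinct vertices $x,y$ are adjacent iff their shortest-path distance $d(x,y)$ in $\mathcal{G}$ (each edge of length 1) is at most $n$. The power filtration is $K_0\subset K_1\subset K_2\subset\cdots\subset K_N$, where $K_0$ is the vertex set $\mathcal{V}$ (as a 0-dimensional complex), $K_n$ for $n\ge 1$ is the clique (flag) complex of $\mathcal{G}^{(n)}$, and $N$ is the diameter of $\mathcal{G}$. $\widehat{PD}_k(\mathcal{G})$ is the $k$-th persistence diagram (field coefficients) of this filtration. *)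

(* Defs.v *)
From HB Require Import structures.
From mathcomp Require Import all_boot all_order all_algebra.
Set Implicit Arguments. Unset Strict Implicit. Unset Printing Implicit Defensive.
Import GRing.Theory.
Local Open Scope ring_scope.

Section PowerFiltration.
Variable V : finType.
(* the graph: a symmetric irreflexive relation e on the finite vertex type V *)
Variable e : rel V.

(* within n x y <=> d(x,y) <= n (there is a path of length <= n from x to y) *)
Fixpoint within (n : nat) (x y : V) : bool :=
  if n is m.+1 then within m x y || [exists z, within m x z && e z y]
  else x == y.

Definition graph_connected : Prop := forall x y : V, exists n, within n x y.

Definition cnbhd (w : V) : {set V} := [set y | (y == w) || e w y].

Definition dominated (u v : V) : bool := cnbhd u \subset cnbhd v.

(* diameter: least n with d(x,y) <= n for all x, y (distances are < #|V|) *)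
Definition diameter : nat :=
  find (fun n => [forall x, forall y, within n x y]) (iota 0 #|V|.+1).

(* s is a k-simplex of K_n = clique complex of G^(n) (K_0 = vertex set) *)
Definition is_clique (n : nat) (s : {set V}) : bool :=
  [forall x in s, forall y in s, (x != y) ==> within n x y].
Definition simplex (n k : nat) (s : {set V}) : bool :=
  (#|s| == k.+1)%N && is_clique n s.

Variable F : fieldType.

(* chains: F-valued functions on finite subsets of V; simplices are oriented
   by the order of enum_rank *)
Definition chain := {ffun {set V} -> F^o}.

Definition elem_chain (s : {set V}) : chain := [ffun t : {set V} => ((t == s)%:R : F)].

Definition chain_sp (n k : nat) : {vspace chain} :=
  <<[seq elem_chain s | s <- enum [pred s | simplex n k s]]>>%VS.

Definition bsign (v : V) (t : {set V}) : F :=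
  (-1) ^+ #|[set w in t | (enum_rank w < enum_rank v)%N]|.

Definition bdry_fun (c : chain) : chain :=
  [ffun t : {set V} => \sum_(v : V | v \notin t) bsign v t * c (v |: t)].

Definition bdry : 'End(chain) := linfun bdry_fun.

Definition cycles (n k : nat) : {vspace chain} := (chain_sp n k :&: lker bdry)%VS.
Definition boundaries (n k : nat) : {vspace chain} := (bdry @: chain_sp n k.+1)%VS.

(* persistent Betti number: rank of H_k(K_i) -> H_k(K_j), i <= j *)
Definition pbetti (k i j : nat) : int :=
  (\dim (cycles i k))%:Z - (\dim (cycles i k :&: boundaries j k))%:Z.

Definition pb (k : nat) (i : option nat) (j : nat) : int :=
  if i is Some i' then pbetti k i' j else 0.

Definition prev (i : nat) : option nat := if i is i'.+1 then Some i' else None.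

(* k-th persistence diagram of K_0 c ... c K_N (N = diameter), as the
   multiplicity of each point (birth b, death d), d = None meaning infinity *)
Definition PD (k b : nat) (d : option nat) : int :=
  match d with
  | Some d =>
      if (b < d <= diameter)%N then
        pb k (Some b) d.-1 - pb k (Some b) d - pb k (prev b) d.-1 + pb k (prev b) d
      else 0
  | None =>
      if (b <= diameter)%N then pb k (Some b) diameter - pb k (prev b) diameter
      else 0
  end.

End PowerFiltration.

Definition del_vertex (V : finType) (e : rel V) (u : V) : rel {x : V | x != u} :=
  fun x y => e (val x) (val y).

(* Main.v *)
Require Import Defs.
From HB Require Import structures.
From mathcomp Require Import all_boot all_order all_algebra.
From mathcomp Require Import ring.
Set Implicit Arguments. Unset Strict Implicit. Unset Printing Implicit Defensive.
Import GRing.Theory.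

Section Within.
Variables (V : finType) (e : rel V).

Lemma within_S n x y : within e n x y -> within e n.+1 x y.
Proof. by move=> h /=; rewrite h. Qed.

Lemma within_add m n x y : within e n x y -> within e (n + m) x y.
Proof. elim: m => [|m IH]; first by rewrite addn0. by move=> h; rewrite addnS within_S // IH. Qed.

Lemma within_le m n x y : m <= n -> within e m x y -> within e n x y.
Proof. by move=> /subnKC <- h; rewrite within_add. Qed.

Lemma within_refl n x : within e n x x.
Proof. by apply: (@within_le 0) => //=. Qed.

Lemma within1 x y : e x y -> within e 1 x y.
Proof. by move=> h /=; apply/orP; right; apply/existsP; exists x; rewrite eqxx h. Qed.

Lemma within_trans m n x z y : within e m x z -> within e n z y -> within e (m + n) x y.
Proof.
move=> hxz; elim: n y => [|n IH] y /=.
  by move/eqP=> <-; rewrite addn0.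
case/orP=> [h|/existsP[w /andP[h1 h2]]]; rewrite addnS /=.
  by rewrite IH.
by apply/orP; right; apply/existsP; exists w; rewrite IH.
Qed.

Hypothesis esym : symmetric e.

Lemma within_sym n x y : within e n x y -> within e n y x.
Proof.
elim: n x y => [|n IH] x y /=; first by rewrite eq_sym.
case/orP=> [h|/existsP[w /andP[h1 h2]]]; first by rewrite IH.
have hyw : e y w by rewrite esym.
by have := within_trans (within1 hyw) (IH _ _ h1); rewrite add1n.
Qed.
End Within.

Section Bound.
Variables (V : finType) (e : rel V).

Lemma within_connect n x y : within e n x y -> connect e x y.
Proof.
elim: n y => [|n IH] y /=; first by move/eqP->; exact: connect0.
case/orP=> [/IH//|/existsP[w /andP[h1 h2]]].
by apply: connect_trans (IH _ h1) (connect1 h2).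
Qed.

Lemma path_within x p : path e x p -> within e (size p) x (last x p).
Proof.
elim: p x => [|z p IH] x /=; first by rewrite eqxx.
case/andP=> h1 h2; have := within_trans (within1 h1) (IH _ h2).
by rewrite add1n.
Qed.

Lemma within_bound n x y : within e n x y -> within e #|V|.-1 x y.
Proof.
move/within_connect/connectP=> [p pp ->].
case: (shortenP pp) => p' pp' up' _.
apply: within_le (path_within pp').
move/card_uniqP: up' => hc.
have := max_card (mem (x :: p')); rewrite hc /=.
by case: #|V|.
Qed.
End Bound.

Local Open Scope ring_scope.

Section Chains.
Variables (V : finType) (e : rel V) (F : fieldType).
Local Notation chain := (chain V F).

Lemma scale_ffunE (a : F) (c : chain) s : (a *: c) s = a * c s.
Proof. by rewrite ffunE. Qed.

Lemma chain_spP n k (c : chain) :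
  reflect (forall s, c s != 0 -> simplex e n k s) (c \in chain_sp e F n k).
Proof.
apply: (iffP idP) => [cin s csn|H].
  set X := [seq elem_chain F s | s <- enum [pred s | simplex e n k s]] in cin.
  have := @coord_span _ _ _ (in_tuple X) c cin => ce.
  move: csn; rewrite ce sum_ffunE.
  apply: contraR => ns; rewrite big1 // => i _.
  rewrite scale_ffunE.
  have iX : (i < size (enum [pred s | simplex e n k s]))%N.
    by move: (ltn_ord i) => /=; rewrite [X in (_ < X)%N -> _]size_map.
  rewrite (nth_map set0) //.
  rewrite ffunE; case: eqP => [es|]; last by rewrite mulr0.
  have : nth set0 (enum [pred s | simplex e n k s]) i \in enum [pred s | simplex e n k s].
    by apply: mem_nth.
  by rewrite mem_enum inE -es (negbTE ns).
have -> : c = \sum_(s : {set V}) c s *: elem_chain F s.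
  apply/ffunP=> s; rewrite sum_ffunE (bigD1 s) //= big1 => [|t ts].
    by rewrite scale_ffunE ffunE eqxx mulr1 addr0.
  by rewrite scale_ffunE ffunE eq_sym (negbTE ts) mulr0.
apply: memv_suml => s _.
have [/eqP->|cs] := boolP (c s == 0); first by rewrite scale0r mem0v.
apply: memvZ; apply: memv_span; apply: map_f.
by rewrite mem_enum inE H.
Qed.
End Chains.

Lemma bdry_fun_lin (V : finType) (F : fieldType) : linear (@bdry_fun V F).
Proof.
move=> a c d; apply/ffunP => t; rewrite !ffunE.
rewrite scaler_sumr -big_split; apply: eq_bigr => w _ /=.
by rewrite !ffunE mulrDr mulrCA.
Qed.

HB.instance Definition _ (V : finType) (F : fieldType) :=
  GRing.isLinear.Build F (chain V F) (chain V F) _ (@bdry_fun V F) (@bdry_fun_lin V F).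

Section Bdry.
Variables (V : finType) (F : fieldType).
Local Notation chain := (chain V F).

Lemma bdryE (c : chain) t :
  bdry V F c t = \sum_(w | w \notin t) bsign F w t * c (w |: t).
Proof. by rewrite /bdry lfunE /= ffunE. Qed.

Definition sgr (x w : V) : F := if (enum_rank x < enum_rank w)%N then -1 else 1.

Lemma bsignU (w x : V) (t : {set V}) : x \notin t -> bsign F w (x |: t) = sgr x w * bsign F w t.
Proof.
move=> xt; rewrite /bsign /sgr; case: ifP => h.
  have -> : [set y in x |: t | (enum_rank y < enum_rank w)%N] =
            x |: [set y in t | (enum_rank y < enum_rank w)%N].
    apply/setP => y; rewrite !inE; case: (eqVneq y x) => [->|//].
    by rewrite h.
  by rewrite cardsU1 inE (negbTE xt) /= exprS.
have -> : [set y in x |: t | (enum_rank y < enum_rank w)%N] =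
          [set y in t | (enum_rank y < enum_rank w)%N].
  apply/setP => y; rewrite !inE; case: (eqVneq y x) => [->|//].
  by rewrite h !andbF.
by rewrite mul1r.
Qed.

Lemma bsign2 (w : V) (t : {set V}) : bsign F w t * bsign F w t = 1.
Proof. by rewrite /bsign -exprD -signr_odd addnn odd_double. Qed.

Lemma sgr2 (x w : V) : sgr x w * sgr x w = 1.
Proof. by rewrite /sgr; case: ifP; rewrite ?mulr1 // mulrNN mulr1. Qed.

Lemma sign_aux (a b c d : F) : a * a = 1 -> a * b * (- a * c * d) + c * (b * d) = 0.
Proof.
move=> h; have -> : a * b * (- a * c * d) = - (a * a) * (b * c * d) by ring.
by rewrite h; ring.
Qed.

Lemma sgr_anti (x w : V) : x != w -> sgr x w = - sgr w x.
Proof.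
move=> xw; rewrite /sgr.
have: enum_rank x != enum_rank w by rewrite (inj_eq enum_rank_inj).
rewrite neq_ltn; case/orP=> h.
  by rewrite h ltnNge ltnW.
by rewrite h ltnNge ltnW // opprK.
Qed.

Lemma sum_anti (R : zmodType) (I : finType) (g : I -> I -> R) :
  (forall w x, g w x = - g x w) -> (forall w, g w w = 0) ->
  \sum_w \sum_x g w x = 0.
Proof.
move=> ga g0.
pose lt (x w : I) := (enum_rank x < enum_rank w)%N.
have split1 : \sum_w \sum_x g w x =
   \sum_w \sum_x (if lt x w then g w x else 0) +
   \sum_w \sum_x (if lt w x then g w x else 0).
  rewrite -big_split; apply: eq_bigr => w _; rewrite -big_split; apply: eq_bigr => x _ /=.
  case: (eqVneq x w) => [->|xw]; first by rewrite /lt ltnn g0 addr0.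
  have: enum_rank x != enum_rank w by rewrite (inj_eq enum_rank_inj).
  rewrite neq_ltn /lt; case/orP=> h.
    by rewrite h ltnNge ltnW // addr0.
  by rewrite h ltnNge ltnW // add0r.
rewrite split1 [X in _ + X]exchange_big /=.
rewrite -big_split big1 // => w _; rewrite -big_split big1 // => x _ /=.
by case: ifP => [_|_]; rewrite ?addr0 // ga addNr.
Qed.

Lemma bdry_bdry (c : chain) : bdry V F (bdry V F c) = 0.
Proof.
apply/ffunP=> t; rewrite ffunE bdryE.
pose g w x := if (w \notin t) && (x \notin w |: t) then
   bsign F w t * (bsign F x (w |: t) * c (x |: (w |: t))) else 0.
transitivity (\sum_w \sum_x g w x).
  rewrite big_mkcond; apply: eq_bigr => w _ /=.
  case: ifP => wt; last by rewrite big1 // => x _; rewrite /g wt.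
  rewrite bdryE mulr_sumr big_mkcond; apply: eq_bigr => x _.
  by rewrite /g wt /=; case: ifP.
apply: sum_anti => [w x|w]; last by rewrite /g setU11 andbF.
rewrite /g !in_setU1 !negb_or.
case: (eqVneq x w) => [->|xw]; first by rewrite /= andbF oppr0.
case wt: (w \in t); first by rewrite /= ?andbF oppr0.
case xt: (x \in t); first by rewrite /= ?andbF oppr0.
rewrite /= !bsignU ?wt ?xt // setUCA (sgr_anti xw).
by ring.
Qed.
End Bdry.

Section Gen.
Variables (V : finType) (e : rel V) (F : fieldType).
Local Notation chain := (chain V F).

Lemma cliqueP n (s : {set V}) :
  reflect (forall x y, x \in s -> y \in s -> x != y -> within e n x y) (is_clique e n s).
Proof.
apply: (iffP forallP) => [H x y xs ys xy|H x].
  by have /implyP/(_ xs)/forallP/(_ y)/implyP/(_ ys)/implyP/(_ xy) := H x.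
by apply/implyP=> xs; apply/forallP=> y; apply/implyP=> ys; apply/implyP; apply: H.
Qed.

Lemma bdry_sp n k (c : chain) :
  c \in chain_sp e F n k.+1 -> bdry V F c \in chain_sp e F n k.
Proof.
move/chain_spP=> H; apply/chain_spP => t.
rewrite bdryE; apply: contraNT => nt; rewrite big1 // => w wt.
have [/eqP->|/H] := boolP (c (w |: t) == 0); first by rewrite mulr0.
case/andP=> /eqP hc /cliqueP cl.
move: hc; rewrite cardsU1 wt add1n => -[hc].
by move: nt; rewrite /simplex hc eqxx /=; case/negP; apply/cliqueP => x y xs ys; apply: cl; rewrite in_setU1 ?xs ?ys orbT.
Qed.

Lemma chain_sp0 k (c : chain) : c \in chain_sp e F 0 k.+1 -> c = 0.
Proof.
move/chain_spP=> H; apply/ffunP => s; rewrite ffunE; apply/eqP; apply: contraT => /H.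
case/andP => /eqP hc /cliqueP cl.
have : (1 < #|s|)%N by rewrite hc.
by case/card_gt1P => x [y [xs ys xy]]; have := cl _ _ xs ys xy => /= /eqP; move/eqP: xy.
Qed.
Lemma chain_sp_mono i j k (c : chain) : (i <= j)%N ->
  c \in chain_sp e F i k -> c \in chain_sp e F j k.
Proof.
move=> ij /chain_spP H; apply/chain_spP => s /H /andP[hc /cliqueP cl].
by rewrite /simplex hc; apply/cliqueP => x y xs ys xy; apply: within_le ij _; apply: cl.
Qed.
End Gen.

Section Dom.
Variables (V : finType) (e : rel V) (F : fieldType) (u v : V).
Hypotheses (esym : symmetric e) (eirr : irreflexive e) (vu : v != u)
  (dom : dominated e u v).
Local Notation chain := (chain V F).

Lemma dom_nb y : e u y -> (y == v) || e v y.
Proof.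
move=> h; have : y \in cnbhd e u by rewrite inE h orbT.
by move/(subsetP dom); rewrite inE.
Qed.

Lemma e_vu : e v u.
Proof.
have : u \in cnbhd e u by rewrite inE eqxx.
by move/(subsetP dom); rewrite inE eq_sym (negbTE vu).
Qed.

Lemma dom_within n y : within e n u y -> y != u -> within e n v y.
Proof.
elim: n y => [|n IH] y /=; first by move=> /eqP->; rewrite eqxx.
case/orP=> [h yu|/existsP[z /andP[h1 h2]] yu]; first by rewrite IH.
case: (eqVneq z u) => [zu|zu].
  subst z; case/orP: (dom_nb h2) => [/eqP->|evy].
    by rewrite within_refl.
  by apply/orP; right; apply/existsP; exists v; rewrite within_refl evy.
by apply/orP; right; apply/existsP; exists z; rewrite IH.
Qed.

Lemma within_v_all n (t : {set V}) y : (0 < n)%N -> u \in t -> is_clique e n t -> y \in t -> within e n v y.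
Proof.
move=> n0 ut /cliqueP cl yt.
case: (eqVneq y v) => [->|yv]; first exact: within_refl.
case: (eqVneq y u) => [->|yu].
  by apply: (within_le n0); exact: within1 e_vu.
by apply: dom_within => //; apply: cl => //; rewrite eq_sym.
Qed.

Lemma clique_addv n (t : {set V}) : (0 < n)%N -> u \in t -> is_clique e n t -> is_clique e n (v |: t).
Proof.
move=> n0 ut cl; apply/cliqueP => x y; rewrite !in_setU1.
case/orP=> [/eqP->|xt]; case/orP=> [/eqP->|yt]; rewrite ?eqxx //.
- by move=> _; apply: (within_v_all n0 ut cl).
- by move=> _; apply: within_sym => //; apply: (within_v_all n0 ut cl).
- by move=> xy; move/cliqueP: cl; apply.
Qed.

Definition hop (c : chain) : chain :=
  [ffun s : {set V} => if (u \in s) && (v \in s) then bsign F v (s :\ v) * c (s :\ v) else 0].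
Definition Phi (c : chain) : chain := c - bdry V F (hop c) - hop (bdry V F c).

Lemma hop0 : hop 0 = 0.
Proof. by apply/ffunP=> s; rewrite !ffunE; case: ifP => //; rewrite mulr0. Qed.

Lemma hop_sp n k (c : chain) : (0 < n)%N ->
  c \in chain_sp e F n k -> hop c \in chain_sp e F n k.+1.
Proof.
move=> n0 /chain_spP H; apply/chain_spP => s; rewrite ffunE.
case: ifP => [/andP[us vs]|]; last by rewrite eqxx.
rewrite mulf_eq0 negb_or => /andP[_ /H /andP[/eqP hc cl]].
have sE : s = v |: (s :\ v) by rewrite setD1K.
apply/andP; split.
  by rewrite (cardsD1 v s) vs hc.
rewrite sE; apply: clique_addv => //.
by rewrite in_setD1 us eq_sym vu.
Qed.

Lemma Phi_sp n k (c : chain) :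
  c \in chain_sp e F n k.+1 -> Phi c \in chain_sp e F n k.+1.
Proof.
case: n => [|n] cin.
  by rewrite (chain_sp0 cin) /Phi !(hop0, linear0) ?subr0 ?oppr0 !addr0 mem0v.
rewrite /Phi; apply: memvB; first apply: memvB => //.
  by apply: bdry_sp; apply: hop_sp.
by apply: hop_sp => //; apply: bdry_sp.
Qed.

Lemma Phi_u (c : chain) (s : {set V}) : u \in s -> Phi c s = 0.
Proof.
move=> us.
suff key : bdry V F (hop c) s + hop (bdry V F c) s = c s.
  have E : forall (a b d : chain), (a - b - d) s = a s - b s - d s.
    by move=> a b d; rewrite !ffunE.
  by rewrite /Phi E -key; ring.
have [vs|vs] := boolP (v \in s).
  set s' := s :\ v.
  have sE : s = v |: s' by rewrite setD1K.
  have vs' : v \notin s' by rewrite in_setD1 eqxx.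
  have us' : u \in s' by rewrite in_setD1 us eq_sym vu.
  rewrite [hop _ s]ffunE us vs /= -/s' [bdry _ _ c _]bdryE (bigD1 v) //= -sE.
  rewrite mulrDr mulrA bsign2 mul1r addrC -addrA [X in _ + X = _]addrC.
  rewrite -[RHS]addr0; congr (_ + _).
  rewrite bdryE mulr_sumr.
  rewrite (eq_bigl (fun w => (w \notin s') && (w != v))); last first.
    by move=> w; rewrite sE in_setU1 negb_or andbC.
  rewrite -big_split /= big1 //.
  move=> w /andP[ws' wv].
  have ws : w \notin s by rewrite sE in_setU1 negb_or wv.
  have wsE : w |: s = v |: (w |: s') by rewrite sE setUCA.
  rewrite [hop _ (w |: s)]ffunE wsE !in_setU1 eqxx us' !orbT /=.
  rewrite setU1K; last by rewrite in_setU1 negb_or eq_sym wv.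
  by rewrite sE (bsignU _ _ vs') (bsignU _ _ ws') (sgr_anti F wv) sign_aux ?sgr2.
rewrite [X in _ + X = _]ffunE (negbTE vs) andbF addr0 bdryE (bigD1 v) //= big1 ?addr0.
  rewrite ffunE setU11 in_setU1 us orbT /= setU1K // mulrA bsign2 mul1r.
  by [].
move=> w /andP[ws wv]; rewrite ffunE !in_setU1 (negbTE vs) [v == w]eq_sym (negbTE wv).
by rewrite andbF mulr0.
Qed.

Lemma hop_off (c : chain) : (forall s : {set V}, u \in s -> c s = 0) -> hop c = 0.
Proof.
move=> H; have uv : u != v by rewrite eq_sym.
apply/ffunP=> s; rewrite !ffunE; case: ifP => // /andP[us _].
by rewrite H ?mulr0 // in_setD1 us uv.
Qed.

Lemma Phi_off (c : chain) : (forall s : {set V}, u \in s -> c s = 0) -> Phi c = c.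
Proof.
move=> H; have uv : u != v by rewrite eq_sym.
have h1 : hop c = 0.
  apply/ffunP=> s; rewrite !ffunE; case: ifP => // /andP[us _].
  by rewrite H ?mulr0 // in_setD1 us uv.
have h2 : hop (bdry V F c) = 0.
  apply/ffunP=> s; rewrite !ffunE; case: ifP => // /andP[us _].
  rewrite bdryE big1 ?mulr0 // => w _; rewrite H ?mulr0 //.
  by rewrite in_setU1 in_setD1 us uv orbT.
by rewrite /Phi h1 h2 linear0 !subr0.
Qed.
End Dom.

Lemma sub_enumE (V : finType) (u : V) : Finite.enum {x : V | x != u} = pmap insub (Finite.enum V).
Proof. by rewrite [in LHS]unlock. Qed.
Lemma rank_index (T : finType) (x : T) : nat_of_ord (enum_rank x) = index x (enum T).
Proof.
have := nth_enum_rank x x; set i := enum_rank x => h.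
by rewrite -[in RHS]h index_uniq ?enum_uniq // -cardE ltn_ord.
Qed.
Lemma index_filter_lt (T : eqType) (P : pred T) (s : seq T) x y : P x -> P y ->
  (index x (filter P s) < index y (filter P s))%N = (index x s < index y s)%N.
Proof.
move=> Px Py; elim: s => [|z s IH] //=.
case Pz: (P z) => /=.
  by case: (z == x); case: (z == y) => //=; rewrite ltnS IH.
have zx : (z == x) = false by apply/eqP => zx; subst; rewrite Px in Pz.
have zy : (z == y) = false by apply/eqP => zy; subst; rewrite Py in Pz.
by rewrite zx zy ltnS IH.
Qed.

Section T2.
Variables (V : finType) (u : V).
Lemma rank_lt (x y : {x : V | x != u}) :
  (enum_rank x < enum_rank y)%N = (enum_rank (val x) < enum_rank (val y))%N.
Proof.
rewrite !rank_index !enumT sub_enumE.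
rewrite -!(index_map val_inj).
have -> : map val (pmap (insub : V -> option {x : V | x != u}) (Finite.enum V)) = filter [pred z | z != u] (Finite.enum V).
  rewrite pmap_filter; last exact: insubK.
  by apply: eq_filter => z; apply: isSome_insub.
by apply: index_filter_lt; [exact: (valP x) | exact: (valP y)].
Qed.
End T2.

Section Del.
Variables (V : finType) (e : rel V) (F : fieldType) (u v : V).
Hypotheses (esym : symmetric e) (eirr : irreflexive e) (vu : v != u)
  (dom : dominated e u v).
Local Notation V' := {x : V | x != u}.
Local Notation e' := (@del_vertex V e u).
Local Notation chain := (chain V F).
Local Notation chain' := (Defs.chain V' F).

Definition v' : V' := Sub v vu.
Definition rr (y : V) : V' := insubd v' y.

Lemma val_rr y : val (rr y) = if y != u then y else v.
Proof. by rewrite /rr val_insubd; case: ifP. Qed.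

Lemma within_del1 n (x y : V') : within e' n x y -> within e n (val x) (val y).
Proof.
elim: n y => [|n IH] y /=; first by move/eqP->.
case/orP=> [/IH->//|/existsP[z /andP[h1 h2]]].
by apply/orP; right; apply/existsP; exists (val z); rewrite IH.
Qed.

Lemma rr_step z y : e z y -> (rr z == rr y) || e' (rr z) (rr y).
Proof.
move=> ezy; rewrite /del_vertex !val_rr.
case: (eqVneq z u) => [zu|zu]; case: (eqVneq y u) => [yu|yu] /=.
- by rewrite zu yu eqxx.
- subst z; case/orP: (dom_nb dom ezy) => [/eqP yv|->]; last by rewrite orbT.
  by apply/orP; left; apply/eqP/val_inj; rewrite !val_rr yv eqxx vu.
- subst y; rewrite esym in ezy.
  case/orP: (dom_nb dom ezy) => [/eqP zv|evz]; last by rewrite esym evz orbT.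
  by apply/orP; left; apply/eqP/val_inj; rewrite !val_rr zv (negPf vu) eqxx.
- by rewrite ezy orbT.
Qed.

Lemma within_rr n (x : V') y : within e n (val x) y -> within e' n x (rr y).
Proof.
elim: n y => [|n IH] y /=.
  move/eqP=> <-; rewrite /rr; apply/eqP/val_inj.
  by rewrite val_insubd (valP x).
case/orP=> [/IH->//|/existsP[z /andP[h1 h2]]].
have := IH _ h1; case/orP: (rr_step h2) => [/eqP<- ->//|ezy hz].
by apply/orP; right; apply/existsP; exists (rr z); rewrite hz ezy.
Qed.

Lemma within_del n (x y : V') : within e' n x y = within e n (val x) (val y).
Proof.
apply/idP/idP; first exact: within_del1.
move/within_rr; congr (within _ _ _ _); rewrite /rr; apply/val_inj.
by rewrite val_insubd (valP y).
Qed.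

Lemma simplex_del n k (t : {set V'}) :
  simplex e' n k t = simplex e n k (val @: t).
Proof.
rewrite /simplex (card_imset _ val_inj); congr (_ && _).
apply/cliqueP/cliqueP => H.
  move=> x y /imsetP[x' xt ->] /imsetP[y' yt ->] xy.
  by rewrite -within_del; apply: H => //; apply: contraNneq xy => ->.
move=> x y xt yt xy; rewrite within_del; apply: H; rewrite ?(mem_imset _ _ val_inj) ?(inj_eq val_inj) //.

Qed.

Definition pre (s : {set V}) : {set V'} := [set x : V' | val x \in s].

Lemma pre_val (t : {set V'}) : pre (val @: t) = t.
Proof. by apply/setP => x; rewrite inE (mem_imset _ _ val_inj). Qed.

Lemma val_pre (s : {set V}) : u \notin s -> val @: pre s = s.
Proof.
move=> us; apply/setP => y; apply/imsetP/idP => [[x]|ys].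
  by rewrite inE => xs ->.
have yu : y != u by apply: contraNneq us => <-.
by exists (Sub y yu); rewrite ?inE.
Qed.

Lemma u_val (t : {set V'}) : u \notin val @: t.
Proof. by apply/imsetP => -[x _ ux]; move: (valP x); rewrite -ux eqxx. Qed.

Definition amap (c : chain') : chain := [ffun s : {set V} => if u \in s then 0 else c (pre s)].
Definition bmap (c : chain) : chain' := [ffun t : {set V'} => c (val @: t)].

Lemma amap_lin : linear amap.
Proof.
move=> a c d; apply/ffunP => s; rewrite !ffunE.
  by case: ifP => _; rewrite ?scaler0 ?addr0.
Qed.

HB.instance Definition _ :=
  GRing.isLinear.Build F chain' chain _ amap amap_lin.

Lemma amap_inj : injective amap.
Proof.
move=> c d h; apply/ffunP => t.
have := congr1 (fun f : chain => f (val @: t)) h; rewrite !ffunE (negbTE (u_val t)).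
by rewrite pre_val.
Qed.

Lemma bmap_amap c : bmap (amap c) = c.
Proof. by apply/ffunP => t; rewrite !ffunE (negbTE (u_val t)) pre_val. Qed.

Lemma amap_bmap (c : chain) : (forall s : {set V}, u \in s -> c s = 0) -> amap (bmap c) = c.
Proof.
move=> H; apply/ffunP => s; rewrite !ffunE.
by case: ifP => us; [rewrite H | rewrite val_pre ?us].
Qed.

Lemma amap_off c (s : {set V}) : u \in s -> amap c s = 0.
Proof. by rewrite ffunE => ->. Qed.

Lemma amap_sp n k c : c \in chain_sp e' F n k -> amap c \in chain_sp e F n k.
Proof.
move/chain_spP=> H; apply/chain_spP => s; rewrite ffunE.
case: ifP => us; first by rewrite eqxx.
by move/H; rewrite simplex_del val_pre ?us.
Qed.

Lemma bmap_sp n k c : c \in chain_sp e F n k -> bmap c \in chain_sp e' F n k.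
Proof.
move/chain_spP=> H; apply/chain_spP => t; rewrite ffunE => /H.
by rewrite simplex_del.
Qed.

Lemma bsign_del (w : V') (s : {set V}) : u \notin s ->
  bsign F w (pre s) = bsign F (val w) s.
Proof.
move=> us; rewrite /bsign; congr (_ ^+ _).
rewrite -(card_imset _ val_inj); apply: eq_card => y.
apply/imsetP/idP => [[x]|].
  by rewrite !inE rank_lt => /andP[xs xw] ->; rewrite xs xw.
rewrite inE => /andP[ys yw].
have yu : y != u by apply: contraNneq us => <-.
by exists (Sub y yu) => //; rewrite !inE /= ys -(rank_lt (Sub y yu) w) in yw *.
Qed.

Lemma amap_bdry c : amap (bdry V' F c) = bdry V F (amap c).
Proof.
apply/ffunP => s; rewrite [LHS]ffunE [RHS]bdryE.
case: ifP => us.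
  by rewrite big1 // => w _; rewrite amap_off ?mulr0 // in_setU1 us orbT.
rewrite bdryE [RHS](bigID (fun w => w == u)) /= [X in _ = X + _]big1 ?add0r; last first.
  by move=> w /andP[_ /eqP->]; rewrite amap_off ?mulr0 // setU11.
rewrite (reindex_omap (val : V' -> V) insub); last first.
  move=> w /= /andP[_ wu]; case: insubP => [w' _ <-|] //=; by rewrite wu.
apply: eq_big => [w|w ws].
  by rewrite inE (valP w) valK eqxx !andbT.
rewrite bsign_del ?us // ffunE in_setU1 us orbF eq_sym (negbTE (valP w)).
congr (_ * c _); apply/setP => x; rewrite !inE (inj_eq val_inj).
by [].
Qed.
End Del.

Lemma dim_transfer (K : fieldType) (X X' : vectType K) (A : 'Hom(X', X))
  (Z B : {vspace X}) (Z' B' : {vspace X'}) :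
  lker A = 0%VS -> (A @: Z' <= Z)%VS -> (Z <= A @: Z' + (Z :&: B))%VS ->
  (forall z, z \in Z' -> (A z \in B) = (z \in B')) ->
  ((\dim Z)%:Z - (\dim (Z :&: B))%:Z = (\dim Z')%:Z - (\dim (Z' :&: B'))%:Z :> int).
Proof.
move=> k0 sZ sZ2 hB.
have ZE : Z = (A @: Z' + (Z :&: B))%VS.
  by apply/eqP; rewrite eqEsubv sZ2 subv_add sZ capvSl.
have capE : (A @: Z' :&: (Z :&: B))%VS = (A @: (Z' :&: B'))%VS.
  apply/eqP; rewrite eqEsubv; apply/andP; split; apply/subvP => x.
    case/memv_capP => /memv_imgP[z zZ ->] /memv_capP[_ zB].
    by apply: memv_img; rewrite memv_cap zZ -hB.
  case/memv_imgP => z /memv_capP[zZ zB] ->.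
  rewrite memv_cap memv_img //= memv_cap hB // zB andbT.
  by apply: (subvP sZ); apply: memv_img.
have dimA (U : {vspace X'}) : \dim (A @: U) = \dim U.
  by apply: limg_dim_eq; rewrite k0 capv0.
have := dimv_sum_cap (A @: Z') (Z :&: B).
rewrite -ZE capE !dimA => h.
apply/eqP; rewrite subr_eq addrAC eq_sym subr_eq -!PoszD h.
by rewrite addnC.
Qed.

Section Main.
Variables (V : finType) (e : rel V) (F : fieldType) (u v : V).
Hypotheses (esym : symmetric e) (eirr : irreflexive e) (vu : v != u)
  (dom : dominated e u v).
Local Notation V' := {x : V | x != u}.
Local Notation e' := (@del_vertex V e u).
Local Notation chain := (Defs.chain V F).
Local Notation chain' := (Defs.chain V' F).

Definition Am : 'Hom(chain', chain) := linfun (@amap V F u).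
Lemma AmE c : Am c = amap c. Proof. by rewrite lfunE. Qed.

Lemma Am_ker : lker Am = 0%VS.
Proof. by apply/eqP/lker0P => x y; rewrite !AmE; apply: amap_inj. Qed.

Lemma Phi_cycle (z : chain) : bdry V F z = 0 -> Phi u v z = z - bdry V F (hop u v z).
Proof. by move=> hz; rewrite /Phi hz hop0 subr0. Qed.

Lemma bdry_Phi (z : chain) : bdry V F (Phi u v z) = bdry V F z - bdry V F (hop u v (bdry V F z)).
Proof. by rewrite /Phi !linearB /= bdry_bdry subr0. Qed.

Lemma hop_spj i j k (z : chain) : (i <= j)%N -> z \in chain_sp e F i k.+1 ->
  hop u v z \in chain_sp e F j k.+2.
Proof.
case: i => [|i] ij zin.
  by rewrite (chain_sp0 zin) hop0 mem0v.
by apply: (chain_sp_mono ij); apply: hop_sp.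
Qed.

Theorem pbetti_eq k i j : (0 < k)%N -> (i <= j)%N ->
  pbetti e F k i j = pbetti e' F k i j.
Proof.
case: k => [//|k] _ ij; rewrite /pbetti.
apply: (dim_transfer (A := Am)); first exact: Am_ker.
- apply/subvP => x /memv_imgP[z /memv_capP[zsp zk] ->].
  rewrite AmE memv_cap (amap_sp esym vu dom zsp) /= memv_ker -amap_bdry.
  by move: zk; rewrite memv_ker => /eqP->; rewrite linear0.
- apply/subvP => z /memv_capP[zsp]; rewrite memv_ker => /eqP zk.
  set z0 := Phi u v z.
  have z0off : forall s : {set V}, u \in s -> z0 s = 0 by move=> s us; apply: Phi_u.
  have z0sp : z0 \in chain_sp e F i k.+1 by apply: Phi_sp.
  have z0k : bdry V F z0 = 0 by rewrite bdry_Phi zk hop0 linear0 subr0.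
  set z' := bmap u z0.
  have Az' : amap z' = z0 by apply: amap_bmap.
  have z'k : bdry V' F z' = 0.
    by apply: amap_inj; rewrite amap_bdry Az' z0k linear0.
  have z'Z : z' \in cycles e' F i k.+1.
    by rewrite memv_cap (bmap_sp esym vu dom z0sp) /= memv_ker z'k.
  have z0Z : z0 \in cycles e F i k.+1.
    by rewrite /cycles memv_cap z0sp memv_ker z0k eqxx.
  have zE : z = z0 + bdry V F (hop u v z) by rewrite /z0 Phi_cycle // subrK.
  rewrite {1}zE; apply: memv_add.
    by rewrite -Az' -AmE memv_img.
  rewrite memv_cap; apply/andP; split.
    have -> : bdry V F (hop u v z) = z - z0 by rewrite [in RHS]zE addrC addKr.
    by apply: memvB => //; rewrite /cycles memv_cap zsp memv_ker zk eqxx.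
  by apply: memv_img; apply: hop_spj zsp.
- move=> z' /memv_capP[z'sp]; rewrite memv_ker => /eqP z'k.
  rewrite AmE; apply/idP/idP.
    case/memv_imgP => w wsp wE.
    set w0 := Phi u v w.
    have w0off : forall s : {set V}, u \in s -> w0 s = 0 by move=> s us; apply: Phi_u.
    have w0sp : w0 \in chain_sp e F j k.+2 by apply: Phi_sp.
    have hz : hop u v (amap z') = 0 by apply: hop_off => // s us; apply: amap_off.
    have w0k : bdry V F w0 = amap z' by rewrite bdry_Phi -wE hz linear0 subr0.
    set w' := bmap u w0.
    have Aw' : amap w' = w0 by apply: amap_bmap.
    have -> : z' = bdry V' F w'.
      by apply: amap_inj; rewrite amap_bdry Aw' w0k.
    by apply: memv_img; apply: (bmap_sp esym vu dom).
  case/memv_imgP => w' w'sp ->.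
  by rewrite amap_bdry; apply: memv_img; apply: (amap_sp esym vu dom).
Qed.
End Main.

Definition Pd (V : finType) (e : rel V) n := [forall x, forall y, within e n x y].

Lemma PdP (V : finType) (e : rel V) n : reflect (forall x y, within e n x y) (Pd e n).
Proof.
apply: (iffP forallP) => [H x y|H x]; first by have /forallP := H x; apply.
by apply/forallP.
Qed.

Lemma diam_spec (V : finType) (e : rel V) m : Pd e m -> (m <= #|V|)%N ->
  Pd e (diameter e) /\ (diameter e <= m)%N.
Proof.
move=> Pm mV; rewrite /diameter.
set s := iota 0 #|V|.+1.
have hs : has (Pd e) s by apply/hasP; exists m => //; rewrite mem_iota.
have lt := hs; rewrite has_find in lt.
have sz : size s = #|V|.+1 by rewrite size_iota.
split.
  by have := nth_find 0 hs; rewrite nth_iota ?add0n -?sz.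
rewrite leqNgt; apply/negP => hm.
have := before_find 0 hm; rewrite nth_iota ?add0n ?Pm //.
by move: Pm; rewrite /Pd => ->.
Qed.

Lemma stab_sp (V : finType) (e : rel V) (F : fieldType) m n k :
  Pd e m -> (m <= n)%N -> chain_sp e F n k = chain_sp e F m k.
Proof.
move=> /PdP Pm mn; rewrite /chain_sp; congr (<< _ >>%VS); congr map.
apply: eq_enum => s; rewrite !inE /simplex; congr (_ && _).
apply/cliqueP/cliqueP => _ x y _ _ _; rewrite ?Pm //.
exact: within_le mn (Pm x y).
Qed.

Lemma stab_pbetti (V : finType) (e : rel V) (F : fieldType) m k i j :
  Pd e m -> (m <= j)%N -> pbetti e F k i j = pbetti e F k i m.
Proof.
by move=> Pm mj; rewrite /pbetti /boundaries (stab_sp _ _ Pm mj).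
Qed.

Lemma stab_pbetti2 (V : finType) (e : rel V) (F : fieldType) m k i j :
  Pd e m -> (m <= i)%N -> (m <= j)%N -> pbetti e F k i j = pbetti e F k m m.
Proof.
move=> Pm mi mj; rewrite (stab_pbetti _ _ _ Pm mj).
by rewrite /pbetti /cycles (stab_sp _ _ Pm mi).
Qed.

Unset Implicit Arguments.
Close Scope ring_scope.

Theorem theorem3 (F : fieldType) (V : finType) (e : rel V) (u v : V) :
  symmetric e -> irreflexive e -> graph_connected e ->
  v != u -> dominated e u v ->
  forall k : nat, (1 <= k)%N ->
  forall (b : nat) (d : option nat),
    PD e F k b d = PD (@del_vertex V e u) F k b d.
Proof.
move=> esym eirr conn vu dom k k1 b d.
set e' := @del_vertex V e u.
have PG : Pd e (#|V|.-1).
  by apply/PdP => x y; have [n h] := conn x y; exact: within_bound h.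
have [PD_ DleV] := diam_spec PG (leq_pred _).
have cardV' : #|{: {x : V | x != u}}| = #|V|.-1.
  by rewrite card_sig cardC1.
have PG' : Pd e' (#|{: {x : V | x != u}}|.-1).
  apply/PdP => x y; apply: (@within_bound _ _ #|V|.-1).
  by rewrite (within_del esym vu dom); move/PdP: PG; apply.
have [PD'_ _] := diam_spec PG' (leq_pred _).
have PDe' : Pd e' (diameter e).
  by apply/PdP => x y; rewrite (within_del esym vu dom); move/PdP: PD_; apply.
have [_ D'le] := diam_spec PDe' (ltac:(by rewrite cardV')).
set D := diameter e in PD_ DleV PDe' D'le *.
set D' := diameter e' in PD'_ D'le *.
have pbE i j : (i <= j)%N -> pbetti e F k i j = pbetti e' F k i j.
  by move=> ij; apply: (pbetti_eq F esym vu dom).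
have stab i j : (D' <= j)%N -> pbetti e' F k i j = pbetti e' F k i D'.
  by move=> hj; apply: (stab_pbetti F k i PD'_ hj).
rewrite /PD -/D -/D'.
case: d => [d|].
  case: (ltnP D' d) => hd'.
    rewrite andbF.
    case: ifP => // /andP[bd dD].
    have d1 : (D' <= d.-1)%N by rewrite -ltnS prednK // (leq_ltn_trans _ bd).
    have bd1 : (b <= d.-1)%N by rewrite -ltnS prednK // (leq_ltn_trans _ bd).
    rewrite /pb !pbE ?(ltnW bd) // stab // [pbetti _ _ _ b d]stab ?(ltnW hd') //.
    case: b bd bd1 => [|b] bd bd1 /=; first by rewrite !subr0 subrr.
    rewrite !pbE ?(leq_trans (leqnSn _) bd1) ?(leq_trans (leqnSn _) (ltnW bd)) //.
    rewrite stab // [pbetti _ _ _ b d]stab ?(ltnW hd') //.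
    by rewrite subrr sub0r addNr.
  have dD : (d <= D)%N by apply: leq_trans hd' D'le.
  rewrite dD !andbT; case: ifP => // bd.
  have bd1 : (b <= d.-1)%N by rewrite -ltnS prednK // (leq_ltn_trans _ bd).
  rewrite /pb !pbE ?(ltnW bd) //.
  case: b bd bd1 => [|b] bd bd1 //=.
  by rewrite !pbE ?(leq_trans (leqnSn _) bd1) ?(leq_trans (leqnSn _) (ltnW bd)).
case: (leqP b D') => hb.
  rewrite (leq_trans hb D'le) /pb pbE ?(leq_trans hb D'le) // stab //.
  case: b hb => [|b] hb //=.
  by rewrite pbE ?stab // (leq_trans (leqnSn _) (leq_trans hb D'le)).
case: ifP => // bD.
case: b hb bD => [//|b] hb bD /=.
rewrite !pbE ?(leq_trans (leqnSn _) bD) //.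
rewrite (stab_pbetti2 F k (i:=b.+1) PD'_ (ltnW hb) D'le).
by rewrite (stab_pbetti2 F k (i:=b) PD'_ hb D'le) subrr.
Qed.
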